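(* Let $p>1$, let $k\ge 2$ be an integer and define \[\psi_k(x)=\sin^p(\pi x)\Big(\frac1{(k-x)^p}+\frac1{(k+x-1)^p}\Big),\qquad x\in[1/2,1].\] If $x\in(1/2,1)$ and $\psi_k'(x)<0$, then $\psi_{k+1}'(x)<0$. *)

(* Defs.v *)
From Stdlib Require Import Reals.
From Coquelicot Require Import Coquelicot.
Open Scope R_scope.

(* psi_k(x) = sin^p(pi x) * (1/(k-x)^p + 1/(k+x-1)^p), real exponent p via Rpower
   (all bases are positive for x in (1/2,1), k >= 2). *)
Definition psi (p : R) (k : nat) (x : R) : R :=
  Rpower (sin (PI * x)) p *
  (/ Rpower (INR k - x) p + / Rpower (INR k + x - 1) p).

(* Main.v *)
Require Import Defs.
From Stdlib Require Import Reals Lra Lia.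
From Coquelicot Require Import Coquelicot.
Open Scope R_scope.

Lemma Rpow_der (u : R -> R) q x du : 0 < u x -> is_derive u x du ->
  is_derive (fun t => Rpower (u t) q) x (du * (q * Rpower (u x) (q-1))).
Proof.
intros Hu Hd.
apply (is_derive_comp (fun y => Rpower y q) u x); [|exact Hd].
apply is_derive_Reals. now apply derivable_pt_lim_power.
Qed.

Lemma Rpower_pos z q : 0 < Rpower z q.
Proof. unfold Rpower; apply exp_pos. Qed.

Lemma Rpower_split z q : 0 < z -> Rpower z q = z * Rpower z (q - 1).
Proof.
intros Hz. replace q with (1 + (q-1)) at 1 by ring.
rewrite Rpower_plus, Rpower_1; auto.
Qed.

Lemma Rd_mult (f g : R -> R) x df dg : is_derive f x df -> is_derive g x dg ->
  is_derive (fun t => f t * g t) x (df * g x + f x * dg).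
Proof. intros G1 G2. exact (@is_derive_mult R_AbsRing f g x df dg G1 G2 Rmult_comm). Qed.
Lemma Rd_plus (f g : R -> R) x df dg : is_derive f x df -> is_derive g x dg ->
  is_derive (fun t => f t + g t) x (df + dg).
Proof. intros G1 G2. exact (@is_derive_plus R_AbsRing _ f g x df dg G1 G2). Qed.
Lemma Rd_minus (f g : R -> R) x df dg : is_derive f x df -> is_derive g x dg ->
  is_derive (fun t => f t - g t) x (df - dg).
Proof. intros G1 G2. exact (@is_derive_minus R_AbsRing _ f g x df dg G1 G2). Qed.
Lemma Rd_const (a x : R) : is_derive (fun _ => a) x 0.
Proof. exact (@is_derive_const R_AbsRing _ a x). Qed.
Lemma Rd_id (x : R) : is_derive (fun t => t) x 1.
Proof. exact (@is_derive_id R_AbsRing x). Qed.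
Lemma Rd_sin x : is_derive (fun t => sin (PI * t)) x (PI * cos (PI * x)).
Proof.
apply is_derive_Reals.
replace (PI * cos (PI * x)) with (cos (PI * x) * (PI * 1)) by ring.
apply (derivable_pt_lim_comp (fun t => PI * t) sin).
- apply is_derive_Reals. apply is_derive_scal, Rd_id.
- apply derivable_pt_lim_sin.
Qed.

Lemma is_derive_eq (f : R -> R) x l l' : is_derive f x l -> l = l' -> is_derive f x l'.
Proof. intros H ->; exact H. Qed.

Lemma psi_der p k x : (1 <= k)%nat -> 1/2 < x < 1 ->
  Derive (psi p k) x =
  p * Rpower (sin (PI * x)) (p-1) *
   (PI * cos (PI * x) * ((INR k - x) * Rpower (INR k - x) (-p-1)
                        + (INR k + x - 1) * Rpower (INR k + x - 1) (-p-1))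
    + sin (PI * x) * (Rpower (INR k - x) (-p-1) - Rpower (INR k + x - 1) (-p-1))).
Proof.
intros Hk Hx.
assert (HK : 1 <= INR k) by (apply (le_INR 1); auto).
assert (Hs : 0 < sin (PI * x)).
{ apply sin_gt_0; pose proof PI_RGT_0; nra. }
assert (Ha : 0 < INR k - x) by lra.
assert (Hb : 0 < INR k + x - 1) by lra.
apply is_derive_unique.
apply (is_derive_ext (fun t => Rpower (sin (PI * t)) p *
   (Rpower (INR k - t) (- p) + Rpower (INR k + t - 1) (- p)))).
{ intro t. unfold psi. rewrite !Rpower_Ropp. reflexivity. }
eapply is_derive_eq.
{ apply Rd_mult.
  - apply (Rpow_der (fun t => sin (PI * t))); auto. apply Rd_sin.
  - apply Rd_plus.
    + apply (Rpow_der (fun t => INR k - t)); auto.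
      apply Rd_minus; [apply Rd_const|apply Rd_id].
    + apply (Rpow_der (fun t => INR k + t - 1)); auto.
      apply Rd_minus; [|apply Rd_const].
      apply Rd_plus; [apply Rd_const|apply Rd_id].
  }
{ cbv beta. rewrite (Rpower_split (sin (PI*x)) p Hs), (Rpower_split (INR k - x) (-p) Ha),
    (Rpower_split (INR k + x - 1) (-p) Hb).
  match goal with |- ?a = ?b => change (@eq R a b) end. ring. }
Qed.

Lemma key_ineq a b q : 0 < a < b -> 0 < q ->
  Rpower (a+1) (-q) * Rpower b (-q) < Rpower a (-q) * Rpower (b+1) (-q).
Proof.
intros [Ha Hab] Hq.
rewrite !Rpower_mult_distr by lra.
rewrite !Rpower_Ropp.
apply Rinv_lt_contravar.
- apply Rmult_lt_0_compat; apply Rpower_pos.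
- apply Rlt_Rpower_l; auto. split; nra.
Qed.

Lemma neg_pow_dec a b q : 0 < a -> a < b -> 0 < q -> Rpower b (-q) < Rpower a (-q).
Proof.
intros Ha Hab Hq. rewrite !Rpower_Ropp. apply Rinv_lt_contravar.
- apply Rmult_lt_0_compat; apply Rpower_pos.
- apply Rlt_Rpower_l; lra.
Qed.

Theorem lemma2 (p : R) (k : nat) (x : R) :
  1 < p -> (2 <= k)%nat -> 1/2 < x < 1 ->
  Derive (psi p k) x < 0 -> Derive (psi p (S k)) x < 0.
Proof.
intros Hp Hk Hx HD.
rewrite psi_der in HD by (lia || lra).
rewrite psi_der by (lia || lra).
rewrite S_INR.
assert (HK : 2 <= INR k) by (apply (le_INR 2); auto).
assert (Hs : 0 < sin (PI * x)).
{ apply sin_gt_0; pose proof PI_RGT_0; nra. }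
assert (HC : PI * cos (PI * x) < 0).
{ pose proof PI_RGT_0. assert (cos (PI * x) < 0). apply cos_lt_0; nra. nra. }
set (s := sin (PI * x)) in *.
set (C := PI * cos (PI * x)) in *.
set (Sp := Rpower s (p-1)) in *.
assert (HS : 0 < Sp) by apply Rpower_pos.
replace (INR k + 1 - x) with ((INR k - x) + 1) by ring.
replace (INR k + 1 + x - 1) with ((INR k + x - 1) + 1) by ring.
set (a := INR k - x) in *. set (b := INR k + x - 1) in *.
assert (Ha : 0 < a) by (unfold a; lra).
assert (Hab : a < b) by (unfold a, b; lra).
replace (-p-1) with (-(p+1)) in * by ring.
pose proof (key_ineq a b (p+1) (conj Ha Hab) ltac:(lra)) as Hkey.
set (al := Rpower a (-(p+1))) in *.
set (be := Rpower b (-(p+1))) in *.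
set (al' := Rpower (a+1) (-(p+1))) in *.
set (be' := Rpower (b+1) (-(p+1))) in *.
assert (0 < al) by apply Rpower_pos.
assert (Hba : be < al) by (unfold al, be; apply neg_pow_dec; lra).
assert (Hba' : be' < al') by (unfold al', be'; apply neg_pow_dec; lra).
assert (0 < be) by apply Rpower_pos.
assert (0 < al') by apply Rpower_pos.
assert (0 < be') by apply Rpower_pos.
assert (HpS : 0 < p * Sp) by nra.

assert (G1 : C * (a * al + b * be) + s * (al - be) < 0).
{ destruct (Rlt_or_le (C * (a * al + b * be) + s * (al - be)) 0); auto.
  exfalso. assert (0 <= p * Sp * (C * (a * al + b * be) + s * (al - be))) by (apply Rmult_le_pos; lra). lra. }
set (Q := a * al + b * be) in *.
set (Q' := (a+1) * al' + (b+1) * be').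
assert (HQ : 0 < Q) by (unfold Q; nra).
assert (HQ' : 0 < Q') by (unfold Q'; nra).
assert (G2 : (al' - be') * Q <= (al - be) * Q').
{ assert (E : (al - be) * Q' - (al' - be') * Q = al * al' - be * be' + (a+b+1) * (al * be' - al' * be)) by (unfold Q, Q'; ring).
  assert (0 <= (a+b+1) * (al * be' - al' * be)) by (apply Rmult_le_pos; lra).
  assert (be * be' <= al * al') by (apply Rmult_le_compat; lra). lra. }
assert (G3 : s * (al' - be') * Q < - C * Q * Q') by nra.
assert (G4 : C * Q' + s * (al' - be') < 0) by nra.
fold Q'. nra.
Qed.
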